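(* Let $n\ge 0$ and let $(K,w_K)$ and $(H,w_H)$ be $(n+1)$-dimensional weighted simplicial complexes such that $(H,w_H)$ is a subcomplex of $(K,w_K)$ and their proper difference $(L,w_L)$ exists, i.e. $L=K$ as simplicial complexes, $w_L=w_K-w_H$ (with $w_H$ extended by $0$ to faces of $K$ not in $H$), and $\{F\in K : w_L(F)>0\}$ is a simplicial complex. Let $N=|S_n(K)|=\dim C^n(K,\mathbb{R})$ and let $\lambda_1\le\lambda_2\le\dots\le\lambda_N$ and $\theta_1\le\theta_2\le\dots\le\theta_N$ be the eigenvalues of $\mathcal{L}^{up}_n(K,w_K)$ and $\mathcal{L}^{up}_n(L,w_L)$, respectively. Put $D_{\mathcal{W}}=\dim C^{n+1}(H,\mathbb{R})-\dim H^{n+1}(H,\mathbb{R})$ and $D_H=\dim C^n(H,\mathbb{R})$, and use the convention $\lambda_j=0$ for $j\le 0$. Then $$\theta_k\le\lambda_{k+D_H}\quad\text{for all } k=1,\dots,N-D_H,$$ and $$\lambda_{k-D_{\mathcal{W}}}\le\theta_k\quad\text{for all } k=1,\dots,N.$$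
   Context: A finite abstract simplicial complex $K$ is a family of finite subsets of a vertex set closed under taking subsets; $S_j(K)$ is its set of $j$-faces (faces with $j+1$ vertices). An oriented simplex $[F]$ is a face with an ordering of its vertices, two orderings giving the same orientation iff they differ by an even permutation. $C^j(K,\mathbb{R})$ is the real vector space of functions $f$ on oriented $j$-faces with $f$ changing sign when the orientation is reversed; it has the basis of elementary cochains $e_{[F]}$, $F\in S_j(K)$. The coboundary $\delta_j:C^j\to C^{j+1}$ is $(\delta_j f)([v_0,\dots,v_{j+1}])=\sum_{i=0}^{j+1}(-1)^i f([v_0,\dots,\hat v_i,\dots,v_{j+1}])$. For an oriented $(j+1)$-face $[\bar F]=[v_0,\dots,v_{j+1}]$ and $[F_i]=[v_0,\dots,\hat v_i,\dots,v_{j+1}]$, $\mathrm{sgn}([F_i],\partial[\bar F])=(-1)^i$ (and the sign changes if the orientation of $F_i$ is reversed). A weight function is $w:\bigcup_j S_j(K)\to[0,\infty)$; $(K,w)$ is a weighted simplicial complex if $w>0$ everywhere and a degenerate weighted simplicial complex if zero values are allowed. The weights define $(f,g)=\sum_{F\in S_j(K)}w(F)f([F])g([F])$ on $C^j(K,\mathbb{R})$. The (formal) adjoint $\delta_j^*:C^{j+1}\to C^j$ is $(\delta_j^*\bar f)([F])=\sum_{\bar F\in S_{j+1}(K),\,F\subset\bar F}\frac{w(\bar F)}{w(F)}\mathrm{sgn}([F],\partial[\bar F])\bar f([\bar F])$ if $w(F)\ne 0$ and $0$ if $w(F)=0$. The $n$-th up-Laplacian is $\mathcal{L}^{up}_n(K,w)=\delta_n^*\delta_n:C^n(K,\mathbb{R})\to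 C^n(K,\mathbb{R})$; its eigenvalues are real and listed with multiplicity. A weighted complex $(H,w_H)$ is a subcomplex of $(K,w_K)$ if $H$ is a subcomplex of $K$ and $w_H(F)\le w_K(F)$ for all faces $F$ of $H$. $H^{n+1}(H,\mathbb{R})$ is the simplicial cohomology of $H$ with real coefficients. *)

(* Defs.v *)
From HB Require Import structures.
From mathcomp Require Import all_boot all_order all_algebra.
From mathcomp Require Import reals.
Set Implicit Arguments. Unset Strict Implicit. Unset Printing Implicit Defensive.
Import Order.TTheory GRing.Theory Num.Theory.
Local Open Scope ring_scope.

(* Vertices are 'I_V (a finite vertex set), a face is a {set 'I_V},
   a complex is a {set {set 'I_V}}. Each face is oriented by the
   increasing order of its vertices. *)

Definition is_complex (V : nat) (K : {set {set 'I_V}}) : Prop :=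
  forall F G : {set 'I_V}, F \in K -> G \subset F -> G \in K.

Definition has_dim (V : nat) (K : {set {set 'I_V}}) (d : nat) : Prop :=
  (exists2 F, F \in K & #|F| = d.+1) /\ (forall F, F \in K -> (#|F| <= d.+1)%N).

Definition faces (V : nat) (K : {set {set 'I_V}}) (j : nat) : {set {set 'I_V}} :=
  [set F in K | #|F| == j.+1].

(* sgn([F], d[Fbar]) for increasingly oriented faces: (-1)^i where i is
   the position (from 0) in Fbar of the vertex removed; 0 if F is not a
   facet of Fbar. *)
Definition sgn (R : pzRingType) (V : nat) (F Fbar : {set 'I_V}) : R :=
  if (F \subset Fbar) && (#|Fbar| == #|F|.+1) then
    \sum_(v in Fbar :\: F) (-1) ^+ #|[set u in F | (nat_of_ord u < nat_of_ord v)%N]|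
  else 0.

(* Matrix of the coboundary delta_j : C^j(K) -> C^{j+1}(K) in the bases of
   elementary cochains (acting on column vectors). *)
Definition cob (R : pzRingType) (V : nat) (K : {set {set 'I_V}}) (j : nat)
  : 'M[R]_(#|faces K j.+1|, #|faces K j|) :=
  \matrix_(i < #|faces K j.+1|, k < #|faces K j|)
     sgn R (enum_val k) (enum_val i).

(* Matrix of the (formal) adjoint delta_j^* : C^{j+1}(K) -> C^j(K). *)
Definition adj (R : fieldType) (V : nat) (K : {set {set 'I_V}})
  (w : {set 'I_V} -> R) (j : nat) : 'M[R]_(#|faces K j|, #|faces K j.+1|) :=
  \matrix_(k < #|faces K j|, i < #|faces K j.+1|)
     (if w (enum_val k) == 0 then 0
      else w (enum_val i) / w (enum_val k) * sgn R (enum_val k) (enum_val i)).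

Definition Lup (R : fieldType) (V : nat) (K : {set {set 'I_V}})
  (w : {set 'I_V} -> R) (n : nat) : 'M[R]_(#|faces K n|) :=
  adj K w n *m cob R K n.

Definition coh_dim (R : fieldType) (V : nat) (K : {set {set 'I_V}}) (j : nat) : nat :=
  (#|faces K j| - \rank (cob R K j)
   - (if j is j'.+1 then \rank (cob R K j') else 0))%N.

(* 1-based access to a sorted eigenvalue list, with value 0 at index 0
   (convention lambda_j = 0 for j <= 0). *)
Definition ev (R : pzRingType) (s : seq R) (k : nat) : R :=
  if k is k'.+1 then nth 0 s k' else 0.

(* Main.v *)
Require Import Defs.
From HB Require Import structures.
From mathcomp Require Import all_boot all_order all_algebra.
From mathcomp Require Import reals.
From mathcomp Require Import ring lra zify.
Set Implicit Arguments. Unset Strict Implicit. Unset Printing Implicit Defensive.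
Import Order.TTheory GRing.Theory Num.Theory.
Local Open Scope ring_scope.

Lemma block_char (F : fieldType) m1 m2 (A : 'M[F]_(m1 + m2))
  (V1 : 'M_(m1, m1 + m2)) (V2 : 'M_(m2, m1 + m2)) (A1 : 'M_m1) (A2 : 'M_m2) :
  col_mx V1 V2 \in unitmx -> V1 *m A = A1 *m V1 -> V2 *m A = A2 *m V2 ->
  char_poly A = char_poly A1 * char_poly A2.
Proof.
move=> hV h1 h2; set V := col_mx V1 V2.
have hB : V *m A = block_mx A1 0 0 A2 *m V.
  by rewrite /V mul_col_mx mul_block_col !mul0mx addr0 add0r h1 h2.
set Vp := map_mx (@polyC F) V.
have hc : Vp *m char_poly_mx A = char_poly_mx (block_mx A1 0 0 A2) *m Vp.
  rewrite /char_poly_mx mulmxBr mulmxBl scalar_mxC; congr (_ - _).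
  by rewrite /Vp -!map_mxM hB.
have := congr1 determinant hc; rewrite !det_mulmx /Vp det_map_mx /=.
rewrite char_block_diag_mx det_ublock -/(char_poly A) -/(char_poly A1) -/(char_poly A2).
rewrite [_ * (\det V)%:P]mulrC; apply: mulfI.
by rewrite polyC_eq0 -unitfE -unitmxE.
Qed.

Lemma block_char_gen (F : fieldType) N m1 m2 (A : 'M[F]_N)
  (V1 : 'M_(m1, N)) (V2 : 'M_(m2, N)) (A1 : 'M_m1) (A2 : 'M_m2) :
  (m1 + m2 = N)%N -> \rank (col_mx V1 V2) = N ->
  V1 *m A = A1 *m V1 -> V2 *m A = A2 *m V2 ->
  char_poly A = char_poly A1 * char_poly A2.
Proof.
move=> e; case: N / e in A V1 V2 * => hr h1 h2.
apply: block_char h1 h2; by rewrite -row_free_unit /row_free hr.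
Qed.

Section PartA.
Variable R : realFieldType.
Variable n' : nat.
Local Notation N := n'.+1.
Variables G D : 'M[R]_N.
Hypothesis hDs : D^T = D.
Hypothesis hD : forall x : 'rV_N, x != 0 -> 0 < (x *m D *m x^T) 0 0.
Hypothesis hGD : (G *m D)^T = G *m D.

Definition ip (x y : 'rV[R]_N) := (x *m D *m y^T) 0 0.

Lemma ipC x y : ip x y = ip y x.
Proof.
rewrite /ip; have -> : x *m D *m y^T = (y *m D *m x^T)^T.
  by rewrite !trmx_mul trmxK hDs mulmxA.
by rewrite mxE.
Qed.

Lemma ipDl x y z : ip (x + y) z = ip x z + ip y z.
Proof. by rewrite /ip !mulmxDl mxE. Qed.
Lemma ipZl a x z : ip (a *: x) z = a * ip x z.
Proof. by rewrite /ip -!scalemxAl mxE. Qed.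
Lemma ipDr x y z : ip z (x + y) = ip z x + ip z y.
Proof. by rewrite ipC ipDl ![ip _ z]ipC. Qed.
Lemma ipZr a x z : ip z (a *: x) = a * ip z x.
Proof. by rewrite ipC ipZl ipC. Qed.
Lemma ip0l z : ip 0 z = 0.
Proof. by rewrite /ip !mul0mx mxE. Qed.
Lemma ip0r z : ip z 0 = 0.
Proof. by rewrite ipC ip0l. Qed.
Lemma ipNl x z : ip (- x) z = - ip x z.
Proof. by rewrite -scaleN1r ipZl mulN1r. Qed.

Lemma ip_ge0 x : 0 <= ip x x.
Proof. by have [->|/hD/ltW//] := eqVneq x 0; rewrite ip0l. Qed.

Lemma ip_eq0 x : ip x x = 0 -> x = 0.
Proof. by have [//|/hD] := eqVneq x 0; rewrite /ip => /gt_eqF /eqP. Qed.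

Lemma ipG x y : ip (x *m G) y = ip x (y *m G).
Proof.
have e : D *m G^T = G *m D by rewrite -hGD trmx_mul hDs.
by rewrite /ip trmx_mul mulmxA -(mulmxA x D) e mulmxA.
Qed.

Lemma iphorner p x y : ip (x *m horner_mx G p) y = ip x (y *m horner_mx G p).
Proof.
elim/poly_ind: p x y => [|p c IH] x y; first by rewrite rmorph0 !mulmx0 ip0l ip0r.
rewrite rmorphD rmorphM /= horner_mx_X horner_mx_C !mulmxDr !mulmxA.
rewrite ipDl ipDr; congr (_ + _); last by rewrite !mul_mx_scalar ipZl ipZr.
have hc : G *m horner_mx G p = horner_mx G p *m G by apply: comm_mx_horner.
by rewrite ipG IH -!mulmxA hc.
Qed.

Lemma eigen_horner (p : {poly R}) (x : 'rV_N) (t : R) : x *m G = t *: x -> x *m horner_mx G p = p.[t] *: x.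
Proof.
move=> hx; elim/poly_ind: p => [|p c IH]; first by rewrite rmorph0 mulmx0 horner0 scale0r.
rewrite rmorphD rmorphM /= horner_mx_X horner_mx_C mulmxDr mulmxA IH -scalemxAl hx.
by rewrite mul_mx_scalar hornerMXaddC scalerDl scalerA.
Qed.

Definition pr (rs : seq R) : {poly R} := \prod_(r <- rs) ('X - r%:P).

Lemma hmM (x : 'rV_N) (p q : {poly R}) :
  x *m horner_mx G (p * q) = x *m horner_mx G p *m horner_mx G q.
Proof. by rewrite rmorphM mulmxA. Qed.

Lemma dup (t : R) rs (x : 'rV_N) : t \in rs -> x *m horner_mx G (pr (t :: rs)) = 0 ->
  x *m horner_mx G (pr rs) = 0.
Proof.
move=> trs hx.
have e : pr rs = ('X - t%:P) * pr (rem t rs).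
  by rewrite /pr (perm_big _ (perm_to_rem trs)) big_cons.
set Q := pr (rem t rs) in e.
have e2 : pr (t :: rs) = Q * ('X - t%:P) * ('X - t%:P).
  by rewrite /pr big_cons -/(pr rs) e; ring.
set y := x *m horner_mx G Q.
set z := y *m horner_mx G ('X - t%:P).
have hz : z *m horner_mx G ('X - t%:P) = 0.
  by rewrite /z /y -!hmM mulrA -e2.
have : ip z z = 0 by rewrite {1}/z iphorner hz ip0r.
move/ip_eq0 => z0.
by rewrite e mulrC hmM.
Qed.

Lemma splitk (t : R) rs (x : 'rV_N) : t \notin rs -> x *m horner_mx G (pr (t :: rs)) = 0 ->
  exists x1 x2, [/\ x = x1 + x2, x1 *m horner_mx G (pr rs) = 0,
     x2 *m G = t *: x2 & ip x1 x2 = 0].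
Proof.
move=> trs hx; set Q := pr rs.
have hQt : Q.[t] != 0.
  by apply: contra trs => h; rewrite -root_prod_XsubC /root -/(pr rs).
have [S hS] : exists S, Q - Q.[t]%:P = S * ('X - t%:P).
  by apply/factor_theorem; rewrite /root hornerD hornerN hornerC subrr.
set a := Q.[t]^-1.
have ePt : pr (t :: rs) = ('X - t%:P) * Q by rewrite /pr big_cons.
exists (x *m horner_mx G (- (a%:P * S * ('X - t%:P)))),
       (x *m horner_mx G (a%:P * Q)); split.
- rewrite -mulmxDr -rmorphD /=.
  have -> : - (a%:P * S * ('X - t%:P)) + a%:P * Q = 1.
    have -> : - (a%:P * S * ('X - t%:P)) + a%:P * Q = a%:P * (Q - S * ('X - t%:P)).
      by ring.
    have -> : Q - S * ('X - t%:P) = Q.[t]%:P by rewrite -hS; ring.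
    by rewrite -polyCM mulVf.
  by rewrite rmorph1 mulmx1.
- rewrite -hmM.
  have -> : - (a%:P * S * ('X - t%:P)) * pr rs = pr (t :: rs) * (- (a%:P * S)).
    by rewrite ePt -/Q; ring.
  by rewrite hmM hx mul0mx.
- apply/eqP; rewrite -subr_eq0 -mul_mx_scalar -mulmxBr.
  have -> : G - t%:M = horner_mx G ('X - t%:P).
    by rewrite rmorphB /= horner_mx_X horner_mx_C.
  rewrite -hmM.
  have -> : a%:P * Q * ('X - t%:P) = pr (t :: rs) * a%:P by rewrite ePt; ring.
  by rewrite hmM hx mul0mx.
- set x1 := x *m _; set x2 := x *m _.
  have hx1 : x1 *m horner_mx G Q = 0.
    rewrite /x1 -hmM.
    have -> : - (a%:P * S * ('X - t%:P)) * Q = pr (t :: rs) * (- (a%:P * S)).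
      by rewrite ePt; ring.
    by rewrite hmM hx mul0mx.
  have hx2 : x2 *m G = t *: x2.
    apply/eqP; rewrite -subr_eq0 -mul_mx_scalar -mulmxBr.
    have -> : G - t%:M = horner_mx G ('X - t%:P).
      by rewrite rmorphB /= horner_mx_X horner_mx_C.
    rewrite /x2 -hmM.
    have -> : a%:P * Q * ('X - t%:P) = pr (t :: rs) * a%:P by rewrite ePt; ring.
    by rewrite hmM hx mul0mx.
  have := iphorner Q x1 x2; rewrite hx1 ip0l (eigen_horner _ hx2) ipZr.
  by move/esym/eqP; rewrite mulf_eq0 (negPf hQt) /= => /eqP.
Qed.

Lemma quad_expand (x1 x2 : 'rV_N) (t : R) : x2 *m G = t *: x2 -> ip x1 x2 = 0 ->
  ip ((x1 + x2) *m G) (x1 + x2) = ip (x1 *m G) x1 + t * ip x2 x2 /\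
  ip (x1 + x2) (x1 + x2) = ip x1 x1 + ip x2 x2.
Proof.
move=> h2 h12; have h21 : ip x2 x1 = 0 by rewrite ipC.
have h1G2 : ip (x1 *m G) x2 = 0 by rewrite ipG h2 ipZr h12 mulr0.
rewrite mulmxDl !ipDl !ipDr h2 !ipZl h1G2 h12 h21; split; ring.
Qed.

Lemma quad_lb (m : R) rs (x : 'rV_N) : all (fun r => m <= r) rs ->
  x *m horner_mx G (pr rs) = 0 -> m * ip x x <= ip (x *m G) x.
Proof.
elim: rs x => [|t rs IH] x /=.
  by move=> _; rewrite /pr big_nil rmorph1 mulmx1 => ->; rewrite mul0mx ip0l mulr0.
move=> /andP[hmt hall] hx; have [trs|trs] := boolP (t \in rs).
  by apply: IH => //; exact: dup hx.
have [x1 [x2 [-> h1 h2 h12]]] := splitk trs hx.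
have [-> ->] := quad_expand h2 h12.
have := IH x1 hall h1; have := ip_ge0 x2; nra.
Qed.

Lemma quad_ub (m : R) rs (x : 'rV_N) : all (fun r => r <= m) rs ->
  x *m horner_mx G (pr rs) = 0 -> ip (x *m G) x <= m * ip x x.
Proof.
elim: rs x => [|t rs IH] x /=.
  by move=> _; rewrite /pr big_nil rmorph1 mulmx1 => ->; rewrite mul0mx ip0l mulr0.
move=> /andP[hmt hall] hx; have [trs|trs] := boolP (t \in rs).
  by apply: IH => //; exact: dup hx.
have [x1 [x2 [-> h1 h2 h12]]] := splitk trs hx.
have [-> ->] := quad_expand h2 h12.
have := IH x1 hall h1; have := ip_ge0 x2; nra.
Qed.

Lemma coprime_pr (p : {poly R}) rs : (forall r, r \in rs -> ~~ root p r) ->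
  coprimep p (pr rs).
Proof.
elim: rs => [|r rs IH] h; first by rewrite /pr big_nil coprimep1.
rewrite /pr big_cons coprimepMr coprimep_XsubC h ?mem_head //=.
by apply: IH => u hu; apply: h; rewrite in_cons hu orbT.
Qed.

Lemma ker_sub (p : {poly R}) (x : 'rV_N) :
  (x <= kermxpoly G p)%MS = (x *m horner_mx G p == 0).
Proof. by rewrite sub_kermx. Qed.

Variable lam : seq R.
Hypothesis hchar : char_poly G = pr lam.

Section Split.
Variable c : R.
Let rs1 := [seq r <- lam | r <= c].
Let rs2 := [seq r <- lam | ~~ (r <= c)].
Let W1 := kermxpoly G (pr rs1).
Let W2 := kermxpoly G (pr rs2).

Lemma pr_split : pr lam = pr rs1 * pr rs2.
Proof. by rewrite /pr -big_cat /=; apply: perm_big; rewrite perm_sym perm_filterC. Qed.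

Lemma cop12 : coprimep (pr rs1) (pr rs2).
Proof.
apply: coprime_pr => r; rewrite root_prod_XsubC !mem_filter.
by case: (r <= c).
Qed.

Lemma W1_ub x : (x <= W1)%MS -> ip (x *m G) x <= c * ip x x.
Proof.
rewrite ker_sub => /eqP; apply: quad_ub.
by apply/allP => r; rewrite mem_filter => /andP[].
Qed.

Definition mn2 := foldr Num.min (c + 1) rs2.

Lemma mn2P : c < mn2 /\ all (fun r => mn2 <= r) rs2.
Proof.
rewrite /mn2; have : all (fun r => c < r) rs2.
  by apply/allP => r; rewrite mem_filter -ltNge => /andP[].
elim: rs2 => [|r s IH] /=; first by move=> _; split=> //; lra.
move=> /andP[hr /IH [h1 h2]]; split; first by rewrite lt_min hr h1.
rewrite ge_min lexx /=; apply/allP => u hu.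
by rewrite ge_min (allP h2 u hu) orbT.
Qed.

Lemma W2_lb x : (x <= W2)%MS -> x != 0 -> c * ip x x < ip (x *m G) x.
Proof.
rewrite ker_sub => /eqP hx hx0; have [h1 h2] := mn2P.
have := quad_lb h2 hx; have := hD hx0; rewrite -/(ip x x).
move=> hp hle; apply: lt_le_trans hle; by rewrite ltr_pM2r.
Qed.

Lemma rank12 : (\rank W1 + \rank W2)%N = N.
Proof.
have hcap : (W1 :&: W2)%MS = 0 by apply: mxdirect_kermxpoly; exact: cop12.
rewrite -mxrank_sum_cap hcap mxrank0 addn0.
rewrite -(kermxpolyM G cop12) -pr_split -hchar.
by rewrite /kermxpoly Cayley_Hamilton mxrank_ker mxrank0 subn0.
Qed.

Lemma eig1 a : root (char_poly (row_base W1 *m G *m pinvmx (row_base W1))) a -> a <= c.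
Proof.
set V1 := row_base W1; set A1 := _ *m pinvmx _.
have hs : (V1 *m G <= V1)%MS.
  by rewrite -/(stablemx V1 G) stablemx_row_base comm_mx_stable_kermxpoly.
have h1 : V1 *m G = A1 *m V1 by rewrite /A1 mulmxKpV.
rewrite -eigenvalue_root_char => /eigenvalueP [u hu u0].
set x := u *m V1.
have hxG : x *m G = a *: x by rewrite /x -mulmxA h1 mulmxA hu scalemxAl.
have x0 : x != 0 by rewrite /x mulmx_free_eq0 ?row_base_free.
have hxW : (x <= W1)%MS by rewrite /x (submx_trans (submxMl _ _)) // eq_row_base.
have := W1_ub hxW; rewrite hxG ipZl; have := hD x0; rewrite -/(ip x x).
by move=> hp; rewrite ler_pM2r.
Qed.

Lemma eig2 a : root (char_poly (row_base W2 *m G *m pinvmx (row_base W2))) a -> c < a.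
Proof.
set V2 := row_base W2; set A2 := _ *m pinvmx _.
have hs : (V2 *m G <= V2)%MS.
  by rewrite -/(stablemx V2 G) stablemx_row_base comm_mx_stable_kermxpoly.
have h2 : V2 *m G = A2 *m V2 by rewrite /A2 mulmxKpV.
rewrite -eigenvalue_root_char => /eigenvalueP [u hu u0].
set x := u *m V2.
have hxG : x *m G = a *: x by rewrite /x -mulmxA h2 mulmxA hu scalemxAl.
have x0 : x != 0 by rewrite /x mulmx_free_eq0 ?row_base_free.
have hxW : (x <= W2)%MS by rewrite /x (submx_trans (submxMl _ _)) // eq_row_base.
have := W2_lb hxW x0; rewrite hxG ipZl; have := hD x0; rewrite -/(ip x x).
by move=> hp; rewrite ltr_pM2r.
Qed.

Lemma rankW1 : \rank W1 = size rs1.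
Proof.
set V1 := row_base W1; set A1 := V1 *m G *m pinvmx V1.
set V2 := row_base W2; set A2 := V2 *m G *m pinvmx V2.
have h1 : V1 *m G = A1 *m V1.
  by rewrite /A1 mulmxKpV // -/(stablemx V1 G) stablemx_row_base comm_mx_stable_kermxpoly.
have h2 : V2 *m G = A2 *m V2.
  by rewrite /A2 mulmxKpV // -/(stablemx V2 G) stablemx_row_base comm_mx_stable_kermxpoly.
have hr : \rank (col_mx V1 V2) = N.
  by rewrite -addsmxE (adds_eqmx (eq_row_base _) (eq_row_base _)) -(kermxpolyM G cop12)
     -pr_split -hchar /kermxpoly Cayley_Hamilton mxrank_ker mxrank0 subn0.
have hch := block_char_gen rank12 hr h1 h2.
have e : char_poly A1 * char_poly A2 = pr rs1 * pr rs2 by rewrite -hch hchar pr_split.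
have d1 : char_poly A1 %| pr rs1.
  have cp : coprimep (char_poly A1) (pr rs2).
    apply: coprime_pr => r; rewrite mem_filter => /andP[hr' _].
    by apply/negP => /eig1; apply/negP.
  by rewrite -(Gauss_dvdpl _ cp) -e dvdp_mulIl.
have d2 : char_poly A2 %| pr rs2.
  have cp : coprimep (char_poly A2) (pr rs1).
    apply: coprime_pr => r; rewrite mem_filter => /andP[hr' _].
    by apply/negP => /eig2; rewrite ltNge hr'.
  by rewrite -(Gauss_dvdpr _ cp) -e dvdp_mulIr.
have s1 := dvdp_leq (monic_neq0 (monic_prod_XsubC _ _ _)) d1.
have s2 := dvdp_leq (monic_neq0 (monic_prod_XsubC _ _ _)) d2.
rewrite !size_char_poly !size_prod_XsubC !ltnS in s1 s2.
have hs : (size rs1 + size rs2)%N = N.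
  have := size_char_poly G; rewrite hchar size_prod_XsubC => -[<-].
  by rewrite !size_filter -(count_predC (fun r => r <= c)).
move: s1 s2 hs (rank12); rewrite -/W1 -/W2.
move: (\rank W1) (\rank W2) (size rs1) (size rs2) => a b u v; lia.
Qed.

End Split.

Lemma partE (c : R) : exists2 W : 'M_N, (size [seq r <- lam | (r <= c)%R] <= \rank W)%N &
  forall x, (x <= W)%MS -> ip (x *m G) x <= c * ip x x.
Proof. by exists (kermxpoly G (pr [seq r <- lam | r <= c])); [rewrite rankW1 | exact: W1_ub]. Qed.

Lemma partF (c : R) k (U : 'M_(k, N)) :
  (forall x, (x <= U)%MS -> ip (x *m G) x <= c * ip x x) ->
  (\rank U <= size [seq r <- lam | (r <= c)%R])%N.
Proof.
move=> hU; set W2 := kermxpoly G (pr [seq r <- lam | ~~ (r <= c)]).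
have hcap : (U :&: W2)%MS = 0.
  apply/eqP; rewrite -submx0; apply/rV_subP => x; rewrite sub_capmx => /andP[xU xW].
  rewrite submx0; apply/negP => /negP x0.
  have := W2_lb xW x0; have := hU x xU; lra.
have := mxrank_sum_cap U W2; rewrite hcap mxrank0 addn0.
have := rank_leq_col (U + W2)%MS; have := rank12 c; rewrite rankW1 -/W2.
move: (\rank (U + W2)%MS) (\rank U) (\rank W2) (size _) => a b u v; lia.
Qed.

End PartA.

Lemma partE_gen (R : realFieldType) N (G D : 'M[R]_N) (lam : seq R) : (0 < N)%N ->
  D^T = D -> (forall x : 'rV_N, x != 0 -> 0 < (x *m D *m x^T) 0 0) ->
  (G *m D)^T = G *m D -> char_poly G = pr lam -> forall c : R,
  exists2 W : 'M_N, (size [seq r <- lam | (r <= c)%R] <= \rank W)%N &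
   forall x : 'rV_N, (x <= W)%MS -> (x *m G *m D *m x^T) 0 0 <= c * (x *m D *m x^T) 0 0.
Proof. by case: N G D => // n' G D _ hDs hD hGD hch c; apply: partE. Qed.

Lemma partF_gen (R : realFieldType) N (G D : 'M[R]_N) (lam : seq R) : (0 < N)%N ->
  D^T = D -> (forall x : 'rV_N, x != 0 -> 0 < (x *m D *m x^T) 0 0) ->
  (G *m D)^T = G *m D -> char_poly G = pr lam -> forall (c : R) k (U : 'M_(k, N)),
  (forall x : 'rV_N, (x <= U)%MS -> (x *m G *m D *m x^T) 0 0 <= c * (x *m D *m x^T) 0 0) ->
  (\rank U <= size [seq r <- lam | (r <= c)%R])%N.
Proof. by case: N G D => // n' G D _ hDs hD hGD hch c k U; apply: partF. Qed.
Section Count.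
Variable R : realFieldType.

Lemma sorted_nth_le (s : seq R) i j : sorted <=%R s -> (i <= j)%N -> (j < size s)%N ->
  nth 0 s i <= nth 0 s j.
Proof.
move=> hs hij hj; apply: (sorted_leq_nth le_trans lexx) => //; rewrite inE //.
exact: leq_ltn_trans hij hj.
Qed.

Lemma count_ge (s : seq R) (c : R) k : sorted <=%R s -> (k < size s)%N ->
  nth 0 s k <= c -> (k.+1 <= size [seq r <- s | (r <= c)%R])%N.
Proof.
move=> hs hk hc; rewrite size_filter -(cat_take_drop k.+1 s) count_cat.
have : all (fun r => r <= c) (take k.+1 s).
  apply/(all_nthP 0) => j; rewrite size_takel // => hj.
  rewrite nth_take //; apply: le_trans hc; apply: sorted_nth_le => //; lia.
rewrite all_count => /eqP ->; rewrite size_takel //; lia.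
Qed.

Lemma nth_le (s : seq R) (c : R) k : sorted <=%R s -> (k < size s)%N ->
  (k.+1 <= size [seq r <- s | (r <= c)%R])%N -> nth 0 s k <= c.
Proof.
move=> hs hk; rewrite leNgt; apply: contraL => hc.
rewrite size_filter -(cat_take_drop k s) count_cat -ltnNge ltnS.
have -> : count (fun r => r <= c) (drop k s) = 0%N.
  apply/eqP; rewrite -leqn0 leqNgt -has_count; apply/hasPn => r.
  move=> /(nthP 0) [j hj <-]; rewrite nth_drop -ltNge; apply: lt_le_trans hc _.
  rewrite size_drop in hj; apply: sorted_nth_le => //; [exact: leq_addr | by rewrite -ltn_subRL].
by rewrite addn0 (leq_trans (count_size _ _)) // size_take hk.
Qed.

End Count.

Section Gen.
Variable R : realFieldType.

Lemma qdiag m (y e : 'rV[R]_m) :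
  (y *m diag_mx e *m y^T) 0 0 = \sum_i e 0 i * y 0 i ^+ 2.
Proof. by rewrite mxE; apply: eq_bigr => i _; rewrite mul_mx_diag !mxE; ring. Qed.

Lemma sq_gt0 (a : R) : a != 0 -> 0 < a ^+ 2.
Proof. by move=> h; rewrite lt0r sqr_ge0 expf_eq0 h andbT. Qed.

Lemma diag_pos m (e : 'rV[R]_m) : (forall i, 0 < e 0 i) ->
  forall x : 'rV_m, x != 0 -> 0 < (x *m diag_mx e *m x^T) 0 0.
Proof.
move=> he x hx; rewrite qdiag.
have [i hi] : exists i, x 0 i != 0.
  apply/existsP; move: hx; apply: contraR; rewrite negb_exists => /forallP h.
  by apply/eqP/rowP => i; rewrite mxE; have := h i; rewrite negbK => /eqP.
rewrite (bigD1 i) //=.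
have h1 : 0 < e 0 i * x 0 i ^+ 2 by rewrite mulr_gt0 ?he ?sq_gt0.
have h2 : 0 <= \sum_(j | j != i) e 0 j * x 0 j ^+ 2.
  by apply: sumr_ge0 => j _; rewrite mulr_ge0 ?sqr_ge0 ?ltW ?he.
lra.
Qed.

Lemma char_poly_tr m (A : 'M[R]_m) : char_poly A^T = char_poly A.
Proof.
rewrite /char_poly -[in RHS]det_tr; congr (\det _).
by rewrite /char_poly_mx linearB /= tr_scalar_mx map_trmx.
Qed.

Lemma rank_cap_ge m k1 k2 (A : 'M[R]_(k1, m)) (B : 'M[R]_(k2, m)) :
  (\rank A + \rank B <= \rank (A :&: B)%MS + m)%N.
Proof.
rewrite -mxrank_sum_cap addnC leq_add2l; exact: rank_leq_col.
Qed.

Lemma nonzero_row m k (W : 'M[R]_(k, m)) : (0 < \rank W)%N ->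
  exists2 x : 'rV_m, (x <= W)%MS & x != 0.
Proof.
rewrite lt0n mxrank_eq0 => hW.
have : [exists i, row i W != 0].
  move: hW; apply: contraR; rewrite negb_exists => /forallP h.
  by apply/eqP/row_matrixP => i; rewrite row0; have := h i; rewrite negbK => /eqP.
by move=> /existsP [i hi]; exists (row i W); rewrite ?row_sub.
Qed.

End Gen.

Section Concrete.
Variables (R : realType) (V n : nat) (K H : {set {set 'I_V}}).

Lemma LupE (w : {set 'I_V} -> R) (k j : 'I_#|faces K n|) :
  Lup K w n k j = \sum_(i < #|faces K n.+1|)
    (if w (enum_val k) == 0 then 0
     else w (enum_val i) / w (enum_val k) * sgn R (enum_val k) (enum_val i))
    * sgn R (enum_val j) (enum_val i).
Proof. by rewrite /Lup mxE; apply: eq_bigr => i _; rewrite !mxE. Qed.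

Definition Smx (w : {set 'I_V} -> R) :=
  (cob R K n)^T *m diag_mx (\row_(i < #|faces K n.+1|) w (enum_val i)) *m cob R K n.

Lemma Smx_sym w : (Smx w)^T = Smx w.
Proof. by rewrite /Smx !trmx_mul trmxK tr_diag_mx mulmxA. Qed.

Lemma SformE w (x : 'rV_#|faces K n|) :
  (x *m Smx w *m x^T) 0 0 =
  \sum_(i < #|faces K n.+1|) w (enum_val i) * (x *m (cob R K n)^T) 0 i ^+ 2.
Proof.
have -> : x *m Smx w *m x^T = (x *m (cob R K n)^T) *m
   diag_mx (\row_(i < #|faces K n.+1|) w (enum_val i)) *m (x *m (cob R K n)^T)^T.
  by rewrite /Smx trmx_mul trmxK !mulmxA.
by rewrite qdiag; apply: eq_bigr => i _; rewrite mxE.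
Qed.

Lemma Lup_tr_D (w : {set 'I_V} -> R) (d : 'rV_#|faces K n|) :
  (forall k, w (enum_val k) != 0 -> d 0 k = w (enum_val k)) ->
  (forall (k : 'I_#|faces K n|) (i : 'I_#|faces K n.+1|), w (enum_val k) = 0 ->
      w (enum_val i) * sgn R (enum_val k) (enum_val i) = 0) ->
  (Lup K w n)^T *m diag_mx d = Smx w.
Proof.
move=> h1 h2; apply/matrixP => j k; rewrite mul_mx_diag !mxE.
rewrite mulr_suml; apply: eq_bigr => i _.
rewrite mul_mx_diag !mxE.
have [hk|hk] := eqVneq (w (enum_val k)) 0.
  by rewrite !mul0r -mulrA h2 // mulr0.
rewrite h1 //; field; exact: hk.
Qed.

Lemma facesP (L : {set {set 'I_V}}) m (F : {set 'I_V}) :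
  (F \in faces L m) = (F \in L) && (#|F| == m.+1).
Proof. by rewrite /faces inE. Qed.

Definition Pm : 'M[R]_(#|faces K n|, #|faces H n|) :=
  \matrix_(j, l) ((enum_val j == enum_val l :> {set 'I_V})%:R).

Lemma Pm_zero (x : 'rV_#|faces K n|) : x *m Pm = 0 ->
  forall j : 'I_#|faces K n|, enum_val j \in H -> x 0 j = 0.
Proof.
move=> hx j hj.
have hjH : enum_val j \in faces H n.
  by have := enum_valP j; rewrite !facesP hj => /andP[_ ->].
have := congr1 (fun M : 'M_(1, _) => M 0 (enum_rank_in hjH (enum_val j))) hx.
rewrite /= !mxE /Pm (bigD1 j) //= !mxE enum_rankK_in // eqxx mulr1 big1 ?addr0 //.
move=> j' hj'; rewrite !mxE ?enum_rankK_in //; case: eqP => [e|]; last by rewrite mulr0.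
by move/enum_val_inj: e => e; rewrite e eqxx in hj'.
Qed.

Definition Phi : 'M[R]_(#|faces K n|, #|faces H n.+1|) :=
  \matrix_(j, l) sgn R (enum_val j) (enum_val l).

Hypothesis cH : is_complex H.

Lemma sgn0 (F G : {set 'I_V}) : G \in H -> F \notin H -> sgn R F G = 0.
Proof.
move=> hG hF; rewrite /sgn; case: ifP => // /andP[hsub _].
by have := cH hG hsub; rewrite (negPf hF).
Qed.

Lemma Phi_fact : Phi = Pm *m (cob R H n)^T.
Proof.
apply/matrixP => j i; rewrite !mxE.
have hiH : enum_val i \in H by have := enum_valP i; rewrite facesP => /andP[].
case: (boolP (enum_val j \in H)) => hj.
  have hjH : enum_val j \in faces H n.
    by have := enum_valP j; rewrite !facesP hj => /andP[_ ->].
  set l0 := enum_rank_in hjH (enum_val j).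
  have el0 : enum_val l0 = enum_val j by rewrite /l0 enum_rankK_in.
  rewrite (bigD1 l0) //= !mxE el0 eqxx mul1r big1 ?addr0 //.
  move=> l hl; rewrite !mxE; case: eqP => [e|]; last by rewrite mul0r.
  by move: hl; rewrite -el0 in e; rewrite (enum_val_inj e) eqxx.
rewrite sgn0 // big1 // => l _; rewrite !mxE.
have hl : enum_val l \in H by have := enum_valP l; rewrite facesP => /andP[].
by case: eqP => [e|]; [rewrite e hl in hj | rewrite mul0r].
Qed.

Lemma Phi_zero (x : 'rV_#|faces K n|) : x *m Phi = 0 ->
  forall i : 'I_#|faces K n.+1|, enum_val i \in H -> (x *m (cob R K n)^T) 0 i = 0.
Proof.
move=> hx i hi.
have hiH : enum_val i \in faces H n.+1.
  by have := enum_valP i; rewrite !facesP hi => /andP[_ ->].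
have := congr1 (fun M : 'M_(1, _) => M 0 (enum_rank_in hiH (enum_val i))) hx.
rewrite /= !mxE /Phi => h; rewrite -[RHS]h. apply: eq_bigr => j _; by rewrite !mxE enum_rankK_in.
Qed.

Hypothesis dH : has_dim H n.+1.

Lemma rank_Phi : (\rank Phi <= #|faces H n.+1| - coh_dim R H n.+1)%N.
Proof.
have e : #|faces H n.+2| = 0%N.
  apply/eqP; rewrite cards_eq0; apply/eqP/setP => F; rewrite facesP inE.
  case hF: (F \in H) => //=; have := dH.2 F hF.
  by move=> h; apply/negbTE; rewrite neq_ltn ltnS h.
have h0 : (\rank (cob R H n.+1) <= 0)%N by rewrite -[X in (_ <= X)%N]e rank_leq_row.
have h1 := rank_leq_row (cob R H n).
rewrite /coh_dim Phi_fact.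
have := mxrankM_maxr Pm (cob R H n)^T; rewrite mxrank_tr; move: h0 h1 => h0 h1 h2.
move: h0 h1 h2; move: (\rank (Pm *m _)) (\rank (cob R H n.+1)) (\rank (cob R H n)) => a b c; lia.
Qed.

End Concrete.

Theorem theorem1p1 (R : realType) (V n : nat) (K H : {set {set 'I_V}})
  (wK wH : {set 'I_V} -> R) (lam theta : seq R) :
  is_complex K -> has_dim K n.+1 ->
  (forall F, F \in K -> F != set0 -> 0 < wK F) ->
  is_complex H -> has_dim H n.+1 ->
  (forall F, F \in H -> F != set0 -> 0 < wH F) ->
  H \subset K -> (forall F, F \in H -> F != set0 -> wH F <= wK F) ->
  let wL := fun F => wK F - (if F \in H then wH F else 0) in
  (forall F G : {set 'I_V}, F \in K -> 0 < wL F -> G \subset F -> G != set0 -> 0 < wL G) ->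
  sorted <=%R lam -> char_poly (Lup K wK n) = \prod_(x <- lam) ('X - x%:P) ->
  sorted <=%R theta -> char_poly (Lup K wL n) = \prod_(x <- theta) ('X - x%:P) ->
  let N := #|faces K n| in
  let DH := #|faces H n| in
  let DW := (#|faces H n.+1| - coh_dim R H n.+1)%N in
  (forall k, (1 <= k <= N - DH)%N -> ev theta k <= ev lam (k + DH)) /\
  (forall k, (1 <= k <= N)%N -> ev lam (k - DW) <= ev theta k).
Proof.
move=> cK dimK wKp cH dH wHp HK wHK wL hsupp slam clam stheta ctheta N DH DW.
have [N0|Npos] := posnP N.
  by split=> k /andP[h1 h2]; exfalso; move: h2; rewrite N0; lia.
have fK : forall j : 'I_#|faces K n|, enum_val j \in K /\ enum_val j != set0.
  move=> j; have := enum_valP j; rewrite facesP => /andP[h /eqP c].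
  by split=> //; rewrite -card_gt0 c.
have fK1 : forall j : 'I_#|faces K n.+1|, enum_val j \in K /\ enum_val j != set0.
  move=> j; have := enum_valP j; rewrite facesP => /andP[h /eqP c].
  by split=> //; rewrite -card_gt0 c.
have wL_ge0 : forall F, F \in K -> F != set0 -> 0 <= wL F.
  move=> F hF hF0; rewrite /wL /=; case: ifP => hH.
    by have := wHK F hH hF0; lra.
  by have := wKp F hF hF0; lra.
have wL_le : forall F, F \in K -> F != set0 -> wL F <= wK F.
  move=> F hF hF0; rewrite /wL /=; case: ifP => hH; last by lra.
  by have := wHp F hH hF0; lra.
set dK := \row_(j < #|faces K n|) wK (enum_val j).
set dL := \row_(j < #|faces K n|)
  (if wL (enum_val j) == 0 then wK (enum_val j) else wL (enum_val j)).
have dKpos : forall j, 0 < dK 0 j.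
  by move=> j; rewrite mxE; apply: wKp; case: (fK j).
have dLpos : forall j, 0 < dL 0 j.
  move=> j; rewrite mxE; case: eqP => h; first by apply: wKp; case: (fK j).
  by rewrite lt_def wL_ge0 ?andbT; [apply/eqP | case: (fK j) ..].
have eGK : (Lup K wK n)^T *m diag_mx dK = Smx n K wK.
  apply: Lup_tr_D => [k _|k i hk]; first by rewrite mxE.
  by exfalso; have := wKp _ (fK k).1 (fK k).2; rewrite hk ltxx.
have eGL : (Lup K wL n)^T *m diag_mx dL = Smx n K wL.
  apply: Lup_tr_D => [k hk|k i hk]; first by rewrite mxE (negPf hk).
  have [->|hi] := eqVneq (wL (enum_val i)) 0; first by rewrite mul0r.
  rewrite /sgn; case: ifP => [/andP[hsub _]|]; last by rewrite mulr0.
  have hpos : 0 < wL (enum_val i).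
    by rewrite lt_def hi wL_ge0 //; case: (fK1 i).
  by exfalso; have := hsupp _ _ (fK1 i).1 hpos hsub (fK k).2; rewrite hk ltxx.
have hDK := diag_pos dKpos.
have hDL := diag_pos dLpos.
have symK : ((Lup K wK n)^T *m diag_mx dK)^T = (Lup K wK n)^T *m diag_mx dK.
  by rewrite eGK Smx_sym.
have symL : ((Lup K wL n)^T *m diag_mx dL)^T = (Lup K wL n)^T *m diag_mx dL.
  by rewrite eGL Smx_sym.
have chK : char_poly (Lup K wK n)^T = pr lam by rewrite char_poly_tr clam.
have chL : char_poly (Lup K wL n)^T = pr theta by rewrite char_poly_tr ctheta.
have formK : forall x : 'rV_N,
  (x *m (Lup K wK n)^T *m diag_mx dK *m x^T) 0 0 =
  \sum_(i < #|faces K n.+1|) wK (enum_val i) * (x *m (cob R K n)^T) 0 i ^+ 2.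
  by move=> x; rewrite -(mulmxA x) eGK SformE.
have formL : forall x : 'rV_N,
  (x *m (Lup K wL n)^T *m diag_mx dL *m x^T) 0 0 =
  \sum_(i < #|faces K n.+1|) wL (enum_val i) * (x *m (cob R K n)^T) 0 i ^+ 2.
  by move=> x; rewrite -(mulmxA x) eGL SformE.
have szl : size lam = N.
  by have := size_char_poly (Lup K wK n); rewrite clam size_prod_XsubC => -[].
have szt : size theta = N.
  by have := size_char_poly (Lup K wL n); rewrite ctheta size_prod_XsubC => -[].
have SL_ge0 : forall x : 'rV_N, 0 <=
  \sum_(i < #|faces K n.+1|) wL (enum_val i) * (x *m (cob R K n)^T) 0 i ^+ 2.
  move=> x; apply: sumr_ge0 => i _; rewrite mulr_ge0 ?sqr_ge0 //.
  by case: (fK1 i) => *; apply: wL_ge0.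
have th_ge0 : forall j, (j < N)%N -> 0 <= nth 0 theta j.
  move=> j hj; set c := nth 0 theta j.
  have hc := count_ge stheta (_ : (j < size theta)%N) (lexx c).
  have [W hW hWf] := partE_gen Npos (tr_diag_mx dL) hDL symL chL c.
  have hW0 : (0 < \rank W)%N.
    by apply: leq_trans (hW); apply: leq_trans (hc _); rewrite ?szt.
  have [x xW x0] := nonzero_row hW0.
  have := hWf x xW; rewrite formL; have := hDL x x0; have := SL_ge0 x; nra.
split.
- move=> [//|k'] /andP[_ kle].
  rewrite /ev addSn.
  set c := nth 0 lam (k' + DH).
  have hc := count_ge slam (_ : (k' + DH < size lam)%N) (lexx c).
  have [W hW hWf] := partE_gen Npos (tr_diag_mx dK) hDK symK chK c.
  set Z := kermx (Pm R n K H).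
  have hZ : (N - DH <= \rank Z)%N.
    by rewrite mxrank_ker leq_sub2l // rank_leq_col.
  have hU := rank_cap_ge W Z.
  have hUf : forall x : 'rV_N, (x <= W :&: Z)%MS ->
     (x *m (Lup K wL n)^T *m diag_mx dL *m x^T) 0 0 <= c * (x *m diag_mx dL *m x^T) 0 0.
    move=> x; rewrite sub_capmx => /andP[xW xZ].
    have xP : x *m Pm R n K H = 0 by apply/eqP; rewrite -sub_kermx.
    have e : (x *m diag_mx dL *m x^T) 0 0 = (x *m diag_mx dK *m x^T) 0 0.
      rewrite !qdiag; apply: eq_bigr => j _; rewrite !mxE.
      case: (boolP (enum_val j \in H)) => hj; first by rewrite (Pm_zero xP hj) expr0n /= !mulr0.
      have -> : wL (enum_val j) = wK (enum_val j) by rewrite /wL /= (negPf hj) subr0.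
      by case: eqP.
    rewrite e; apply: le_trans (hWf x xW); rewrite formL formK.
    apply: ler_sum => i _; apply: ler_wpM2r; first by rewrite sqr_ge0.
    by case: (fK1 i) => *; apply: wL_le.
  have hF := partF_gen Npos (tr_diag_mx dL) hDL symL chL hUf.
  apply: nth_le => //; first by rewrite szt; lia.
  have : (k' + DH < N)%N by lia.
  move: hc hW hZ hU hF; rewrite szl.
  move: (\rank W) (\rank Z) (\rank (W :&: Z)%MS) (size _) (size _) => a b u v t.
  move=> h1 h2 h3 h4 h5 h6.
  have := h1 h6; lia.
- move=> [//|k'] /andP[_ kle].
  have hk' : (k' < N)%N by lia.
  have [hkD|hkD] := leqP k'.+1 DW.
    have -> : (k'.+1 - DW = 0)%N by apply/eqP; rewrite subn_eq0.
    by rewrite /ev; apply: th_ge0.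
  have -> : (k'.+1 - DW = (k' - DW).+1)%N by lia.
  rewrite /ev.
  set c := nth 0 theta k'.
  have c0 : 0 <= c by apply: th_ge0.
  have hc := count_ge stheta (_ : (k' < size theta)%N) (lexx c).
  have [W hW hWf] := partE_gen Npos (tr_diag_mx dL) hDL symL chL c.
  set Y := kermx (Phi R n K H).
  have hY : (N - DW <= \rank Y)%N.
    by rewrite mxrank_ker leq_sub2l // rank_Phi.
  have hU := rank_cap_ge W Y.
  have hUf : forall x : 'rV_N, (x <= W :&: Y)%MS ->
     (x *m (Lup K wK n)^T *m diag_mx dK *m x^T) 0 0 <= c * (x *m diag_mx dK *m x^T) 0 0.
    move=> x; rewrite sub_capmx => /andP[xW xY].
    have xP : x *m Phi R n K H = 0 by apply/eqP; rewrite -sub_kermx.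
    have e : (x *m (Lup K wK n)^T *m diag_mx dK *m x^T) 0 0 =
             (x *m (Lup K wL n)^T *m diag_mx dL *m x^T) 0 0.
      rewrite formK formL; apply: eq_bigr => i _.
      case: (boolP (enum_val i \in H)) => hi.
        by rewrite (Phi_zero xP hi) expr0n /= !mulr0.
      by rewrite /wL /= (negPf hi) subr0.
    rewrite e; apply: le_trans (hWf x xW) _; apply: ler_wpM2l => //.
    rewrite !qdiag; apply: ler_sum => j _; rewrite !mxE.
    apply: ler_wpM2r; first by rewrite sqr_ge0.
    by case: eqP => // _; case: (fK j) => *; apply: wL_le.
  have hF := partF_gen Npos (tr_diag_mx dK) hDK symK chK hUf.
  apply: nth_le => //; first by rewrite szl; lia.
  have : (k' < N)%N by lia.
  move: hc hW hY hU hF; rewrite szt.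
  move: (\rank W) (\rank Y) (\rank (W :&: Y)%MS) (size _) (size _) => a b u v t.
  move=> h1 h2 h3 h4 h5 h6.
  have := h1 h6; lia.
Qed.
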